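(* Let $\lambda\neq0$ be a constant and let $\phi(x,t)$ be a smooth function with $\phi_x\neq0$ on a connected open domain satisfying $\{\phi;x\}_t+\frac4\lambda\big(\frac{\phi_t}{\phi_x}\big)_x=0$. Set $p=\frac{\phi_t}{\lambda\phi_x}$ and $U=\frac12\{\phi;x\}+\frac1\lambda$. Then a function $V(x,t)$ solves $$V_{xx}+\Big(U-\frac1\lambda\Big)V=0,\qquad V_t=\lambda\Big(pV_x-\frac12 p_xV\Big)$$ if and only if $V=\dfrac{A\phi+B}{\sqrt{\phi_x}}$ for constants $A,B$ (fixed smooth branch of the square root); the nontrivial solutions correspond to $(A,B)\neq(0,0)$.
   Context: The Schwarzian derivative of a function $\phi(x,t)$ with $\phi_x\neq0$ is $\{\phi;x\}=\frac{\phi_{xxx}}{\phi_x}-\frac32\frac{\phi_{xx}^2}{\phi_x^2}$. All functions are smooth. *)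

(* Defs.v *)
From Stdlib Require Import Reals List.
From Coquelicot Require Import Coquelicot.
Open Scope R_scope.

Definition dx (f : R -> R -> R) : R -> R -> R :=
  fun x t => Derive (fun y => f y t) x.
Definition dt (f : R -> R -> R) : R -> R -> R :=
  fun x t => Derive (fun s => f x s) t.

Fixpoint iter_pd (l : list bool) (f : R -> R -> R) : R -> R -> R :=
  match l with
  | nil => f
  | b :: l' => (if b then dx else dt) (iter_pd l' f)
  end.

Definition open2 (D : R -> R -> Prop) : Prop :=
  forall x t, D x t -> exists eps : R, 0 < eps /\
    forall x' t', Rabs (x' - x) < eps -> Rabs (t' - t) < eps -> D x' t'.

Definition connected2 (D : R -> R -> Prop) : Prop :=
  forall U1 U2 : R -> R -> Prop, open2 U1 -> open2 U2 ->
    (forall x t, D x t -> U1 x t \/ U2 x t) ->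
    (forall x t, D x t -> U1 x t -> U2 x t -> False) ->
    (exists x t, D x t /\ U1 x t) ->
    (exists x t, D x t /\ U2 x t) -> False.

Definition smooth_on (D : R -> R -> Prop) (f : R -> R -> R) : Prop :=
  forall (l : list bool) x t, D x t ->
    ex_derive (fun y => iter_pd l f y t) x /\
    ex_derive (fun s => iter_pd l f x s) t /\
    filterlim (fun z : R * R => iter_pd l f (fst z) (snd z))
      (locally (x, t)) (locally (iter_pd l f x t)).

Definition schwarzian (phi : R -> R -> R) : R -> R -> R :=
  fun x t => dx (dx (dx phi)) x t / dx phi x t
             - 3 / 2 * (dx (dx phi) x t / dx phi x t) ^ 2.

(* Main.v *)
Require Import Defs.
From Stdlib Require Import Reals List Lra.
From Coquelicot Require Import Coquelicot.
Open Scope R_scope.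

Lemma iter_app (l1 l2 : list bool) f : iter_pd l1 (iter_pd l2 f) = iter_pd (l1 ++ l2) f.
Proof. induction l1 as [|b l IH]; simpl; [reflexivity| rewrite IH; reflexivity]. Qed.

Lemma smooth_iter D f l : smooth_on D f -> smooth_on D (iter_pd l f).
Proof. intros H l' x t Hd. rewrite iter_app. apply H; auto. Qed.

Lemma loc2 D x t : open2 D -> D x t -> locally_2d D x t.
Proof. intros Ho Hd. destruct (Ho x t Hd) as [eps [He H]].
  exists (mkposreal eps He). simpl. auto. Qed.

Lemma locx D x t : open2 D -> D x t -> locally x (fun y => D y t).
Proof. intros; apply locally_2d_1d_const_y, loc2; auto. Qed.
Lemma loct D x t : open2 D -> D x t -> locally t (fun s => D x s).
Proof. intros; apply locally_2d_1d_const_x, loc2; auto. Qed.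

Lemma sm_x D f x t : smooth_on D f -> D x t -> ex_derive (fun y => f y t) x.
Proof. intros H Hd. exact (proj1 (H nil x t Hd)). Qed.
Lemma sm_t D f x t : smooth_on D f -> D x t -> ex_derive (fun s => f x s) t.
Proof. intros H Hd. exact (proj1 (proj2 (H nil x t Hd))). Qed.

Lemma schw D f x t : open2 D -> smooth_on D f -> D x t -> dx (dt f) x t = dt (dx f) x t.
Proof.
  intros Ho Hs Hd. unfold dx, dt. apply Schwarz.
  - destruct (loc2 D x t Ho Hd) as [d Hdl]. exists d. intros u v H1 H2.
    specialize (Hdl u v H1 H2).
    split; [exact (proj1 (Hs nil u v Hdl))|].
    split; [exact (proj1 (proj2 (Hs nil u v Hdl)))|].
    split; [exact (proj1 (Hs (false::nil) u v Hdl))|].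
    exact (proj1 (proj2 (Hs (true::nil) u v Hdl))).
  - apply continuity_2d_pt_filterlim. exact (proj2 (proj2 (Hs (true::false::nil) x t Hd))).
  - apply continuity_2d_pt_filterlim. exact (proj2 (proj2 (Hs (false::true::nil) x t Hd))).
Qed.

Lemma sign_eq a : a <> 0 -> sign a = (sqrt (Rabs a) * sqrt (Rabs a)) / a.
Proof.
  intros H. rewrite sqrt_sqrt by apply Rabs_pos. unfold sign.
  destruct (total_order_T 0 a) as [[h|h]|h].
  - rewrite Rabs_pos_eq by lra. field; auto.
  - lra.
  - rewrite Rabs_left by lra. field; auto.
Qed.

Lemma sqrt_abs_pos a : a <> 0 -> 0 < sqrt (Rabs a).
Proof. intros; apply sqrt_lt_R0, Rabs_pos_lt; auto. Qed.


Lemma loc_const D h x0 t0 : open2 D -> D x0 t0 ->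
  (forall x t, D x t -> is_derive (fun y => h y t) x 0 /\ is_derive (fun s => h x s) t 0) ->
  exists eps, 0 < eps /\ (forall x t, Rabs (x - x0) < eps -> Rabs (t - t0) < eps -> D x t)
   /\ forall x t, Rabs (x - x0) < eps -> Rabs (t - t0) < eps -> h x t = h x0 t0.
Proof.
  intros Ho Hd Hder. destruct (Ho x0 t0 Hd) as [eps [He HD]].
  exists eps; split; [exact He|split; [exact HD|]].
  intros x t Hx Ht.
  destruct (MVT_cor4 (fun y => h y t) (fun _ => 0) x0 (Rabs (x - x0))) with (b := x)
    as [c [Hc _]].
  { intros c Hc. apply (Hder c t). apply HD; lra. }
  { lra. }
  destruct (MVT_cor4 (fun s => h x0 s) (fun _ => 0) t0 (Rabs (t - t0))) with (b := t)
    as [c' [Hc' _]].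
  { intros c' Hc'. apply (Hder x0 c'). apply HD; [|lra]. rewrite Rminus_diag, Rabs_R0; lra. }
  { lra. }
  simpl in Hc, Hc'. lra.
Qed.

Lemma const_conn D h : open2 D -> connected2 D ->
  (forall x t, D x t -> is_derive (fun y => h y t) x 0 /\ is_derive (fun s => h x s) t 0) ->
  forall x0 t0 x t, D x0 t0 -> D x t -> h x t = h x0 t0.
Proof.
  intros Ho Hc Hder x0 t0 x t H0 H1.
  destruct (Req_dec (h x t) (h x0 t0)) as [E|E]; [exact E|exfalso].
  set (c := h x0 t0) in *.
  apply (Hc (fun x t => D x t /\ h x t = c) (fun x t => D x t /\ h x t <> c)).
  - intros u v [Hu Hv]. destruct (loc_const D h u v Ho Hu Hder) as [e [He [HD Hh]]].
    exists e; split; auto. intros; split; auto. rewrite Hh; auto.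
  - intros u v [Hu Hv]. destruct (loc_const D h u v Ho Hu Hder) as [e [He [HD Hh]]].
    exists e; split; auto. intros; split; auto. rewrite Hh; auto.
  - intros u v Hu. destruct (Req_dec (h u v) c); auto.
  - intros u v _ [_ A] [_ B]; auto.
  - exists x0, t0; auto.
  - exists x, t; auto.
Qed.


Definition sol (D : R -> R -> Prop) (k p : R -> R -> R) (lam : R) (W : R -> R -> R) :=
 forall x t, D x t ->
 ex_derive (fun y => W y t) x /\ ex_derive (fun y => dx W y t) x /\
 ex_derive (fun s => W x s) t /\ ex_derive (fun s => dx W x s) t /\
 dt (dx W) x t = dx (dt W) x t /\
 dx (dx W) x t + k x t * W x t = 0 /\
 dt W x t = lam * (p x t * dx W x t - / 2 * dx p x t * W x t).

Lemma dxdt_sol D k p lam W x t : open2 D ->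
  (forall x t, D x t -> ex_derive (fun y => p y t) x /\ ex_derive (fun y => dx p y t) x) ->
  sol D k p lam W -> D x t ->
  dx (dt W) x t = lam * (dx p x t * dx W x t + p x t * dx (dx W) x t
     - /2 * dx (dx p) x t * W x t - /2 * dx p x t * dx W x t).
Proof.
  intros Ho Hp Hs Hd. unfold dx at 1.
  rewrite (Derive_ext_loc _ (fun y => lam * (p y t * dx W y t - / 2 * dx p y t * W y t))).
  2:{ apply filter_imp with (2 := locx D x t Ho Hd). intros y Hy.
      exact (proj2 (proj2 (proj2 (proj2 (proj2 (proj2 (Hs y t Hy))))))). }
  apply is_derive_unique.
  destruct (Hs x t Hd) as [h1 [h2 _]]. destruct (Hp x t Hd) as [h3 h4].
  auto_derive. { repeat split; auto. }
  unfold dx. ring.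
Qed.

Lemma wronsk D k p lam V W x t : open2 D ->
  (forall x t, D x t -> ex_derive (fun y => p y t) x /\ ex_derive (fun y => dx p y t) x) ->
  sol D k p lam V -> sol D k p lam W -> D x t ->
  is_derive (fun y => V y t * dx W y t - dx V y t * W y t) x 0 /\
  is_derive (fun s => V x s * dx W x s - dx V x s * W x s) t 0.
Proof.
  intros Ho Hp HV HW Hd.
  pose proof (dxdt_sol D k p lam V x t Ho Hp HV Hd) as EV.
  pose proof (dxdt_sol D k p lam W x t Ho Hp HW Hd) as EW.
  destruct (HV x t Hd) as [v1 [v2 [v3 [v4 [v5 [v6 v7]]]]]].
  destruct (HW x t Hd) as [w1 [w2 [w3 [w4 [w5 [w6 w7]]]]]].
  split.
  - auto_derive. { repeat split; auto. }
    change (Derive (fun x0 => V x0 t) x) with (dx V x t).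
    change (Derive (fun x0 => W x0 t) x) with (dx W x t).
    change (Derive (fun x0 => dx V x0 t) x) with (dx (dx V) x t).
    change (Derive (fun x0 => dx W x0 t) x) with (dx (dx W) x t).
    replace (dx (dx V) x t) with (- k x t * V x t) by lra.
    replace (dx (dx W) x t) with (- k x t * W x t) by lra.
    ring.
  - auto_derive. { repeat split; auto. }
    change (Derive (fun x0 => V x x0) t) with (dt V x t).
    change (Derive (fun x0 => W x x0) t) with (dt W x t).
    change (Derive (fun x0 => dx V x x0) t) with (dt (dx V) x t).
    change (Derive (fun x0 => dx W x x0) t) with (dt (dx W) x t).
    rewrite v5, w5, EV, EW, v7, w7.
    replace (dx (dx V) x t) with (- k x t * V x t) by lra.
    replace (dx (dx W) x t) with (- k x t * W x t) by lra.
    match goal with |- ?a = _ => change (@eq R a 0) end. lra.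
Qed.

Lemma uq_x (f : R -> R -> R) x t l : is_derive (fun y => f y t) x l -> dx f x t = l.
Proof. apply is_derive_unique. Qed.
Lemma uq_t (f : R -> R -> R) x t l : is_derive (fun s => f x s) t l -> dt f x t = l.
Proof. apply is_derive_unique. Qed.
Section S.
Variable D : R -> R -> Prop.
Variable phi : R -> R -> R.
Hypothesis Ho : open2 D.
Hypothesis Hs : smooth_on D phi.
Hypothesis Hnz : forall x t, D x t -> dx phi x t <> 0.

Lemma ex_x l x t : D x t -> ex_derive (fun y => iter_pd l phi y t) x.
Proof. intros H. exact (proj1 (Hs l x t H)). Qed.
Lemma ex_t l x t : D x t -> ex_derive (fun s => iter_pd l phi x s) t.
Proof. intros H. exact (proj1 (proj2 (Hs l x t H))). Qed.

Ltac exs H := repeat split;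
  first [ exact (ex_x nil _ _ H) | exact (ex_x (true::nil) _ _ H)
        | exact (ex_x (true::true::nil) _ _ H) | exact (ex_x (false::nil) _ _ H)
        | exact (ex_x (true::false::nil) _ _ H) | exact (ex_x (false::true::nil) _ _ H)
        | exact (ex_t nil _ _ H) | exact (ex_t (true::nil) _ _ H)
        | exact (ex_t (true::true::nil) _ _ H)
        | apply Hnz; exact H
        | apply Rabs_pos_lt; apply Hnz; exact H
        | apply Rgt_not_eq, sqrt_abs_pos, Hnz; exact H
        | idtac ].

Ltac fold_all x t :=
  fold (dx phi x t); fold (dt phi x t);
  fold (dx (dx phi) x t); fold (dt (dx phi) x t); fold (dx (dt phi) x t);
  fold (dx (dx (dx phi)) x t); fold (dt (dx (dx phi)) x t); fold (dx (dt (dx phi)) x t).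

Definition V1 := fun x t => / sqrt (Rabs (dx phi x t)).

Lemma V1x x t : D x t -> is_derive (fun y => V1 y t) x
   (-/2 * (dx (dx phi) x t / dx phi x t) * V1 x t).
Proof.
  intros H. unfold V1. auto_derive. { exs H. }
  fold_all x t. pose proof (Hnz x t H).
  rewrite sign_eq by auto. pose proof (sqrt_abs_pos _ H0).
  match goal with |- ?a = ?b => change (@eq R a b) end. field. split; lra.
Qed.

Ltac fin H :=
  let x := match type of H with D ?x _ => x end in
  let t := match type of H with D _ ?t => t end in
  fold_all x t;
  let h0 := fresh in pose proof (Hnz x t H) as h0;
  rewrite ?(sign_eq _ h0);
  let h1 := fresh in pose proof (sqrt_abs_pos _ h0) as h1;
  match goal with |- ?a = ?b => change (@eq R a b) end;
  field; repeat split; lra.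

Lemma V1t x t : D x t -> is_derive (fun s => V1 x s) t
   (-/2 * (dt (dx phi) x t / dx phi x t) * V1 x t).
Proof. intros H. unfold V1. auto_derive. { exs H. } fin H. Qed.

Definition E1x := fun x t => -/2 * (dx (dx phi) x t / dx phi x t) * V1 x t.
Definition E1t := fun x t => -/2 * (dt (dx phi) x t / dx phi x t) * V1 x t.

Lemma dxV1 x t : D x t -> dx V1 x t = E1x x t.
Proof. intros H. apply is_derive_unique, V1x, H. Qed.
Lemma dtV1 x t : D x t -> dt V1 x t = E1t x t.
Proof. intros H. apply is_derive_unique, V1t, H. Qed.

Lemma V1xx x t : D x t -> is_derive (fun y => dx V1 y t) x
  ((-/2 * (dx (dx (dx phi)) x t / dx phi x t) + 3/4 * (dx (dx phi) x t / dx phi x t)^2) * V1 x t).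
Proof.
  intros H. apply is_derive_ext_loc with (f := fun y => E1x y t).
  { apply filter_imp with (2 := locx D x t Ho H). intros y Hy. symmetry; apply dxV1, Hy. }
  unfold E1x, V1. auto_derive. { exs H. } fin H.
Qed.

Lemma V1xt x t : D x t -> is_derive (fun s => dx V1 x s) t
  ((-/2 * ((dt (dx (dx phi)) x t * dx phi x t - dx (dx phi) x t * dt (dx phi) x t) / (dx phi x t)^2)
    + /4 * (dx (dx phi) x t / dx phi x t) * (dt (dx phi) x t / dx phi x t)) * V1 x t).
Proof.
  intros H. apply is_derive_ext_loc with (f := fun s => E1x x s).
  { apply filter_imp with (2 := loct D x t Ho H). intros y Hy. symmetry; apply dxV1, Hy. }
  unfold E1x, V1. auto_derive. { exs H. } fin H.
Qed.

Lemma V1tx x t : D x t -> is_derive (fun y => dt V1 y t) x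
  ((-/2 * ((dx (dt (dx phi)) x t * dx phi x t - dt (dx phi) x t * dx (dx phi) x t) / (dx phi x t)^2)
    + /4 * (dx (dx phi) x t / dx phi x t) * (dt (dx phi) x t / dx phi x t)) * V1 x t).
Proof.
  intros H. apply is_derive_ext_loc with (f := fun y => E1t y t).
  { apply filter_imp with (2 := locx D x t Ho H). intros y Hy. symmetry; apply dtV1, Hy. }
  unfold E1t, V1. auto_derive. { exs H. } fin H.
Qed.

Definition V2 := fun x t => phi x t * V1 x t.
Definition E2x := fun x t => (dx phi x t - /2 * phi x t * (dx (dx phi) x t / dx phi x t)) * V1 x t.
Definition E2t := fun x t => (dt phi x t - /2 * phi x t * (dt (dx phi) x t / dx phi x t)) * V1 x t.

Lemma V2x x t : D x t -> is_derive (fun y => V2 y t) x (E2x x t).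
Proof. intros H. unfold V2, E2x, V1. auto_derive. { exs H. } fin H. Qed.
Lemma V2t x t : D x t -> is_derive (fun s => V2 x s) t (E2t x t).
Proof. intros H. unfold V2, E2t, V1. auto_derive. { exs H. } fin H. Qed.
Lemma dxV2 x t : D x t -> dx V2 x t = E2x x t.
Proof. intros H. apply is_derive_unique, V2x, H. Qed.
Lemma dtV2 x t : D x t -> dt V2 x t = E2t x t.
Proof. intros H. apply is_derive_unique, V2t, H. Qed.

Lemma V2xx x t : D x t -> is_derive (fun y => dx V2 y t) x
  (phi x t * (-/2 * (dx (dx (dx phi)) x t / dx phi x t) + 3/4 * (dx (dx phi) x t / dx phi x t)^2) * V1 x t).
Proof.
  intros H. apply is_derive_ext_loc with (f := fun y => E2x y t).
  { apply filter_imp with (2 := locx D x t Ho H). intros y Hy. symmetry; apply dxV2, Hy. }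
  unfold E2x, V1. auto_derive. { exs H. } fin H.
Qed.

Lemma V2xt x t : D x t -> is_derive (fun s => dx V2 x s) t
  ((dt (dx phi) x t - /2 * dt phi x t * (dx (dx phi) x t / dx phi x t)
     - /2 * phi x t * ((dt (dx (dx phi)) x t * dx phi x t - dx (dx phi) x t * dt (dx phi) x t) / (dx phi x t)^2)) * V1 x t
   + (dx phi x t - /2 * phi x t * (dx (dx phi) x t / dx phi x t)) * (-/2 * (dt (dx phi) x t / dx phi x t)) * V1 x t).
Proof.
  intros H. apply is_derive_ext_loc with (f := fun s => E2x x s).
  { apply filter_imp with (2 := loct D x t Ho H). intros y Hy. symmetry; apply dxV2, Hy. }
  unfold E2x, V1. auto_derive. { exs H. } fin H.
Qed.

Lemma V2tx x t : D x t -> is_derive (fun y => dt V2 y t) x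
  ((dx (dt phi) x t - /2 * dx phi x t * (dt (dx phi) x t / dx phi x t)
     - /2 * phi x t * ((dx (dt (dx phi)) x t * dx phi x t - dt (dx phi) x t * dx (dx phi) x t) / (dx phi x t)^2)) * V1 x t
   + (dt phi x t - /2 * phi x t * (dt (dx phi) x t / dx phi x t)) * (-/2 * (dx (dx phi) x t / dx phi x t)) * V1 x t).
Proof.
  intros H. apply is_derive_ext_loc with (f := fun y => E2t y t).
  { apply filter_imp with (2 := locx D x t Ho H). intros y Hy. symmetry; apply dtV2, Hy. }
  unfold E2t, V1. auto_derive. { exs H. } fin H.
Qed.

Variable lam : R.
Hypothesis Hlam : lam <> 0.
Definition pp := fun x t => dt phi x t / (lam * dx phi x t).
Definition kk := fun x t => (/ 2 * schwarzian phi x t + / lam) - / lam.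

Lemma ppx x t : D x t -> is_derive (fun y => pp y t) x
  ((dx (dt phi) x t * dx phi x t - dt phi x t * dx (dx phi) x t) / (lam * (dx phi x t)^2)).
Proof. intros H. unfold pp. auto_derive. { exs H. apply Rmult_integral_contrapositive_currified; auto. }
  fin H. Qed.

Lemma pp_ex x t : D x t -> ex_derive (fun y => pp y t) x /\ ex_derive (fun y => dx pp y t) x.
Proof.
  intros H. split. { eexists; apply ppx, H. }
  apply ex_derive_ext_loc with (f := fun y => (dx (dt phi) y t * dx phi y t - dt phi y t * dx (dx phi) y t) / (lam * (dx phi y t)^2)).
  { apply filter_imp with (2 := locx D x t Ho H). intros y Hy. symmetry; apply is_derive_unique, ppx, Hy. }
  auto_derive. exs H. pose proof (Hnz x t H).
  repeat apply Rmult_integral_contrapositive_currified; auto; lra.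
Qed.

Lemma schw1 x t : D x t -> dx (dt phi) x t = dt (dx phi) x t.
Proof. intros H; apply schw with D; auto. Qed.
Lemma schw2 x t : D x t -> dx (dt (dx phi)) x t = dt (dx (dx phi)) x t.
Proof. intros H; apply schw with D; auto. apply (smooth_iter D phi (true::nil)); auto. Qed.

Lemma sol1 : sol D kk pp lam V1.
Proof.
  intros x t H. pose proof (Hnz x t H) as h0.
  split; [eexists; apply V1x, H|].
  split; [eexists; apply V1xx, H|].
  split; [eexists; apply V1t, H|].
  split; [eexists; apply V1xt, H|].
  split. { rewrite (uq_t _ _ _ _ (V1xt x t H)), (uq_x _ _ _ _ (V1tx x t H)), schw2 by auto.
    field; auto. }
  split. { rewrite (uq_x _ _ _ _ (V1xx x t H)).
    unfold kk, schwarzian. field; auto. }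
  rewrite dtV1, dxV1, (uq_x _ _ _ _ (ppx x t H)), schw1 by auto.
  unfold E1t, E1x, pp. field; auto.
Qed.

Lemma sol2 : sol D kk pp lam V2.
Proof.
  intros x t H. pose proof (Hnz x t H) as h0.
  split; [eexists; apply V2x, H|].
  split; [eexists; apply V2xx, H|].
  split; [eexists; apply V2t, H|].
  split; [eexists; apply V2xt, H|].
  split. { rewrite (uq_t _ _ _ _ (V2xt x t H)), (uq_x _ _ _ _ (V2tx x t H)), schw2, schw1 by auto.
    field; auto. }
  split. { rewrite (uq_x _ _ _ _ (V2xx x t H)).
    unfold kk, schwarzian, V2. field; auto. }
  rewrite dtV2, dxV2, (uq_x _ _ _ _ (ppx x t H)), schw1 by auto.
  unfold E2t, E2x, pp, V2. field; auto.
Qed.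
End S.


Lemma wr_const D k p lam V W : open2 D -> connected2 D ->
  (forall x t, D x t -> ex_derive (fun y => p y t) x /\ ex_derive (fun y => dx p y t) x) ->
  sol D k p lam V -> sol D k p lam W ->
  forall x0 t0 x t, D x0 t0 -> D x t ->
  V x t * dx W x t - dx V x t * W x t = V x0 t0 * dx W x0 t0 - dx V x0 t0 * W x0 t0.
Proof.
  intros Ho Hc Hp HV HW x0 t0 x t H0 H.
  apply (const_conn D (fun x t => V x t * dx W x t - dx V x t * W x t) Ho Hc); auto.
  intros u v Huv. apply (wronsk D k p lam V W u v Ho Hp HV HW Huv).
Qed.

Lemma sol_smooth D k p lam V : open2 D -> smooth_on D V ->
  (forall x t, D x t -> dx (dx V) x t + k x t * V x t = 0 /\
     dt V x t = lam * (p x t * dx V x t - / 2 * dx p x t * V x t)) ->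
  sol D k p lam V.
Proof.
  intros Ho Hs He x t H. destruct (He x t H) as [e1 e2].
  split; [exact (proj1 (Hs nil x t H))|].
  split; [exact (proj1 (Hs (true::nil) x t H))|].
  split; [exact (proj1 (proj2 (Hs nil x t H)))|].
  split; [exact (proj1 (proj2 (Hs (true::nil) x t H)))|].
  split; [symmetry; apply (schw D V x t Ho Hs H)|].
  split; auto.
Qed.

Lemma lin_sol D k p lam V1 V2 A B V : open2 D -> sol D k p lam V1 -> sol D k p lam V2 ->
  (forall x t, D x t -> V x t = A * V2 x t + B * V1 x t) ->
  forall x t, D x t -> dx (dx V) x t + k x t * V x t = 0 /\
     dt V x t = lam * (p x t * dx V x t - / 2 * dx p x t * V x t).
Proof.
  intros Ho S1 S2 HV.
  assert (HX : forall x t, D x t -> dx V x t = A * dx V2 x t + B * dx V1 x t).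
  { intros x t H. unfold dx at 1.
    rewrite (Derive_ext_loc _ (fun y => A * V2 y t + B * V1 y t)).
    2:{ apply filter_imp with (2 := locx D x t Ho H). intros y Hy. apply HV, Hy. }
    destruct (S1 x t H) as [a1 _]. destruct (S2 x t H) as [a2 _].
    apply is_derive_unique. auto_derive. { repeat split; auto. } unfold dx. lra. }
  intros x t H. split.
  - unfold dx at 1.
    rewrite (Derive_ext_loc _ (fun y => A * dx V2 y t + B * dx V1 y t)).
    2:{ apply filter_imp with (2 := locx D x t Ho H). intros y Hy. apply HX, Hy. }
    destruct (S1 x t H) as [_ [a1 [_ [_ [_ [o1 _]]]]]]. destruct (S2 x t H) as [_ [a2 [_ [_ [_ [o2 _]]]]]].
    rewrite (is_derive_unique _ _ (A * dx (dx V2) x t + B * dx (dx V1) x t)).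
    2:{ auto_derive. { repeat split; auto. } unfold dx. lra. }
    rewrite HV by auto.
    replace (dx (dx V2) x t) with (- k x t * V2 x t) by lra.
    replace (dx (dx V1) x t) with (- k x t * V1 x t) by lra. lra.
  - unfold dt at 1.
    rewrite (Derive_ext_loc _ (fun s => A * V2 x s + B * V1 x s)).
    2:{ apply filter_imp with (2 := loct D x t Ho H). intros y Hy. apply HV, Hy. }
    destruct (S1 x t H) as [_ [_ [a1 [_ [_ [_ o1]]]]]]. destruct (S2 x t H) as [_ [_ [a2 [_ [_ [_ o2]]]]]].
    rewrite (is_derive_unique _ _ (A * dt V2 x t + B * dt V1 x t)).
    2:{ auto_derive. { repeat split; auto. } unfold dt. lra. }
    rewrite o1, o2, HX, HV by auto. lra.
Qed.

Theorem mainTheorem6 (D : R -> R -> Prop) (lam : R) (phi : R -> R -> R)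
  (HDopen : open2 D) (HDconn : connected2 D) (HDne : exists x t, D x t)
  (Hlam : lam <> 0) (Hphi : smooth_on D phi)
  (Hphix : forall x t, D x t -> dx phi x t <> 0)
  (Heq : forall x t, D x t ->
     dt (schwarzian phi) x t
     + 4 / lam * dx (fun y s => dt phi y s / dx phi y s) x t = 0) :
  let p := fun x t => dt phi x t / (lam * dx phi x t) in
  let U := fun x t => / 2 * schwarzian phi x t + / lam in
  (forall V : R -> R -> R, smooth_on D V ->
     ((forall x t, D x t ->
         dx (dx V) x t + (U x t - / lam) * V x t = 0 /\
         dt V x t = lam * (p x t * dx V x t - / 2 * dx p x t * V x t))
      <->
      exists A B : R, forall x t, D x t ->
         V x t = (A * phi x t + B) / sqrt (Rabs (dx phi x t))))
  /\
  (forall A B : R,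
     (forall x t, D x t -> (A * phi x t + B) / sqrt (Rabs (dx phi x t)) = 0) ->
     A = 0 /\ B = 0).
Proof.
  cbv zeta. destruct HDne as [x0 [t0 H0]].
  pose proof (sol1 D phi HDopen Hphi Hphix lam Hlam) as S1.
  pose proof (sol2 D phi HDopen Hphi Hphix lam Hlam) as S2.
  pose proof (pp_ex D phi HDopen Hphi Hphix lam Hlam) as Hp.
  split.
  - intros V HsV. split.
    + intros HE.
      assert (SV : sol D (kk phi lam) (pp phi lam) lam V) by (apply sol_smooth; auto).
      pose proof (wr_const D _ _ lam V (V2 phi) HDopen HDconn Hp SV S2 x0 t0) as Ca.
      pose proof (wr_const D _ _ lam V (V1 phi) HDopen HDconn Hp SV S1 x0 t0) as Cb.
      pose proof (wr_const D _ _ lam (V1 phi) (V2 phi) HDopen HDconn Hp S1 S2 x0 t0) as Cs.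
      set (al := V x0 t0 * dx (V2 phi) x0 t0 - dx V x0 t0 * V2 phi x0 t0) in *.
      set (be := V x0 t0 * dx (V1 phi) x0 t0 - dx V x0 t0 * V1 phi x0 t0) in *.
      set (si := V1 phi x0 t0 * dx (V2 phi) x0 t0 - dx (V1 phi) x0 t0 * V2 phi x0 t0) in *.
      assert (Hsi : forall x t, D x t -> V1 phi x t * dx (V2 phi) x t - dx (V1 phi) x t * V2 phi x t
                    = dx phi x t * (V1 phi x t)^2).
      { intros x t H. rewrite (dxV1 D phi Hphi Hphix x t H), (dxV2 D phi Hphi Hphix x t H).
        unfold E1x, E2x, V2. field. apply Hphix, H. }
      assert (Hsi0 : si <> 0).
      { unfold si. rewrite Hsi by auto. apply Rmult_integral_contrapositive_currified; [apply Hphix; auto|].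
        apply pow_nonzero. unfold V1. apply Rinv_neq_0_compat.
        apply Rgt_not_eq, sqrt_abs_pos, Hphix; auto. }
      exists (- be / si), (al / si). intros x t H.
      specialize (Ca x t H0 H). specialize (Cb x t H0 H). specialize (Cs x t H0 H).
      assert (Hs : 0 < sqrt (Rabs (dx phi x t))) by (apply sqrt_abs_pos, Hphix, H).
      assert (K : V x t * si = al * V1 phi x t - be * V2 phi x t).
      { rewrite <- Ca, <- Cb, <- Cs. lra. }
      unfold V2, V1 in K. apply Rmult_eq_reg_r with si; auto.
      rewrite K. field. split; lra.
    + intros [A [B HV]].
      apply (lin_sol D (kk phi lam) (pp phi lam) lam (V1 phi) (V2 phi) A B V HDopen S1 S2).
      intros x t H. rewrite HV by auto. unfold V2, V1.
      assert (Hs : 0 < sqrt (Rabs (dx phi x t))) by (apply sqrt_abs_pos, Hphix, H).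
      field. lra.
  - intros A B HAB.
    assert (Z : forall x t, D x t -> A * phi x t + B = 0).
    { intros x t H. specialize (HAB x t H).
      assert (Hs : 0 < sqrt (Rabs (dx phi x t))) by (apply sqrt_abs_pos, Hphix, H).
      apply Rmult_eq_reg_r with (/ sqrt (Rabs (dx phi x t))).
      - unfold Rdiv in HAB. lra.
      - apply Rinv_neq_0_compat; lra. }
    assert (DA : A * dx phi x0 t0 = 0).
    { rewrite <- (Derive_const 0 x0).
      rewrite <- (is_derive_unique (fun y => A * phi y t0 + B) x0 (A * dx phi x0 t0)).
      - apply Derive_ext_loc. apply filter_imp with (2 := locx D x0 t0 HDopen H0).
        intros y Hy. apply Z, Hy.
      - pose proof (sm_x D phi x0 t0 Hphi H0). auto_derive; auto. unfold dx. lra. }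
    assert (A = 0).
    { apply Rmult_integral in DA. destruct DA; auto. exfalso; apply (Hphix x0 t0); auto. }
    split; auto. specialize (Z x0 t0 H0). subst A. lra.
Qed.
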